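(* Let $\alpha\in(0,\pi)$ and let $a,c\in\mathbb{R}^2$ be two distinct points. Then a plane $\alpha$-bend multigraph (resp. a plane $\alpha$-arc multigraph) contains at most two edges between $a$ and $c$, and at most one of them in each of the two open halfplanes bounded by the line $ac$.
   Context: For $\alpha\in(0,\pi)$, an $\alpha$-bend edge between points $a$ and $c$ is a polyline $(a,b,c)$ with a single bend point $b$ (not on the line $ac$) such that the interior angle of the triangle $abc$ at $b$ equals $\alpha$. An $\alpha$-arc edge between $a$ and $c$ is a circular arc with endpoints $a$ and $c$ and central angle $2(\pi-\alpha)$. An $\alpha$-bend (resp. $\alpha$-arc) multigraph is a multigraph embedded in the plane (vertices are distinct points; edges are curves between their endpoints that pairwise do not cross, meet only at common endpoints, and contain no vertex in their relative interior; parallel edges are allowed) in which every edge is an $\alpha$-bend (resp. $\alpha$-arc) edge. *)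

(* Defs.v *)
From HB Require Import structures.
From mathcomp Require Import all_boot all_order all_algebra.
From mathcomp Require Import boolp classical_sets reals trigo.
Set Implicit Arguments. Unset Strict Implicit. Unset Printing Implicit Defensive.
Import Order.TTheory GRing.Theory Num.Theory.
Local Open Scope ring_scope.
Local Open Scope classical_set_scope.

Section Geom.
Variable R : realType.
Definition pt2 := (R * R)%type.

Definition padd (p q : pt2) : pt2 := (p.1 + q.1, p.2 + q.2).
Definition psub (p q : pt2) : pt2 := (p.1 - q.1, p.2 - q.2).
Definition pscale (t : R) (p : pt2) : pt2 := (t * p.1, t * p.2).
Definition dot (p q : pt2) : R := p.1 * q.1 + p.2 * q.2.
Definition cross (p q : pt2) : R := p.1 * q.2 - p.2 * q.1.
Definition pnorm (p : pt2) : R := Num.sqrt (dot p p).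

Definition on_line (a c b : pt2) : Prop := cross (psub c a) (psub b a) = 0.

Definition segment (p q : pt2) : set pt2 :=
  [set padd p (pscale t (psub q p)) | t in [set t : R | 0 <= t <= 1]].

Definition angle_at (a b c : pt2) : R :=
  acos (dot (psub a b) (psub c b) / (pnorm (psub a b) * pnorm (psub c b))).

Definition is_alpha_bend_edge (alpha : R) (a c : pt2) (C : set pt2) : Prop :=
  exists b : pt2, ~ on_line a c b /\ angle_at a b c = alpha /\
                    C = segment a b `|` segment b c.

Definition circ_arc (o : pt2) (r t0 th : R) : set pt2 :=
  [set padd o (pscale r (cos t, sin t)) | t in [set t : R | t0 <= t <= t0 + th]].

Definition is_alpha_arc_edge (alpha : R) (a c : pt2) (C : set pt2) : Prop :=
  let th := 2 * (pi - alpha) in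
  exists (o : pt2) (r t0 : R), 0 < r /\ C = circ_arc o r t0 th /\
    ((a = padd o (pscale r (cos t0, sin t0)) /\
      c = padd o (pscale r (cos (t0 + th), sin (t0 + th)))) \/
     (c = padd o (pscale r (cos t0, sin t0)) /\
      a = padd o (pscale r (cos (t0 + th), sin (t0 + th))))).

Inductive edge_kind := Bend | Arc.

Definition is_alpha_edge (k : edge_kind) (alpha : R) (a c : pt2) (C : set pt2) :=
  match k with
  | Bend => is_alpha_bend_edge alpha a c C
  | Arc => is_alpha_arc_edge alpha a c C
  end.

Definition plane_alpha_multigraph (k : edge_kind) (alpha : R)
  (V E : finType) (pos : V -> pt2) (src tgt : E -> V) (curve : E -> set pt2)
  : Prop :=
  [/\ injective pos,
      (forall e, src e != tgt e),
      (forall e, is_alpha_edge k alpha (pos (src e)) (pos (tgt e)) (curve e)),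
      (forall e f, e != f -> forall p, curve e p -> curve f p ->
         exists v, p = pos v /\ (v = src e \/ v = tgt e) /\ (v = src f \/ v = tgt f))
    & (forall e v, curve e (pos v) -> v = src e \/ v = tgt e)].

Definition edge_between (V E : finType) (pos : V -> pt2) (src tgt : E -> V)
  (a c : pt2) (e : E) : Prop :=
  (pos (src e) = a /\ pos (tgt e) = c) \/ (pos (src e) = c /\ pos (tgt e) = a).

Definition open_halfplane (a c : pt2) (s : bool) : set pt2 :=
  [set p | if s then 0 < cross (psub c a) (psub p a)
                else cross (psub c a) (psub p a) < 0].

Definition curve_in (a c : pt2) (C H : set pt2) : Prop :=
  C `\` [set a; c] `<=` H.

End Geom.

(* Main.v *)
Require Import Defs.
From HB Require Import structures.
From mathcomp Require Import all_boot all_order all_algebra.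
From mathcomp Require Import boolp classical_sets reals trigo.
From mathcomp Require Import ring lra.
Set Implicit Arguments. Unset Strict Implicit. Unset Printing Implicit Defensive.
Import Order.TTheory GRing.Theory Num.Theory.
Local Open Scope ring_scope.
Local Open Scope classical_set_scope.

Definition CC (R : realType) (a c p : pt2 R) := cross (psub c a) (psub p a).
Definition DD (R : realType) (a c p : pt2 R) := dot (psub a p) (psub c p).
Definition hh (R : realType) (a c : pt2 R) (r q : R) (p : pt2 R) :=
  r * DD a c p - q * CC a c p.

Lemma sq_pos (R : realType) (x y z k : R) : z != 0 -> z * z <= (x * x + y * y) * k -> 0 < x * x + y * y.
Proof.
move=> hz h. have hz2 : 0 < z * z by rewrite -expr2 exprn_even_gt0 //=.
have hx : 0 <= x * x + y * y by rewrite addr_ge0 // -expr2 sqr_ge0.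
rewrite lt_neqAle hx andbT eq_sym; apply/negP => /eqP e.
by move: h; rewrite e mul0r leNgt hz2.
Qed.

Lemma solve2 (R : realType) (a c w p : pt2 R) (t : R) :
  cross (psub w a) (psub p a) = 0 -> CC a c p = t * CC a c w -> CC a c w != 0 ->
  p = padd a (pscale t (psub w a)).
Proof.
  rewrite /CC /cross /psub /padd /pscale.
  case: p a c w => [p1 p2] [a1 a2] [c1 c2] [w1 w2] /= crw Ct C20.
  have e1 : (p1 - a1) * ((c1 - a1) * (w2 - a2) - (c2 - a2) * (w1 - a1)) =
            (t * (w1 - a1)) * ((c1 - a1) * (w2 - a2) - (c2 - a2) * (w1 - a1)).
    have -> : (p1 - a1) * ((c1 - a1) * (w2 - a2) - (c2 - a2) * (w1 - a1)) =
      (w1 - a1) * ((c1 - a1) * (p2 - a2) - (c2 - a2) * (p1 - a1))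
      - (c1 - a1) * ((w1 - a1) * (p2 - a2) - (w2 - a2) * (p1 - a1)) by ring.
    rewrite crw Ct; ring.
  have e2 : (p2 - a2) * ((c1 - a1) * (w2 - a2) - (c2 - a2) * (w1 - a1)) =
            (t * (w2 - a2)) * ((c1 - a1) * (w2 - a2) - (c2 - a2) * (w1 - a1)).
    have -> : (p2 - a2) * ((c1 - a1) * (w2 - a2) - (c2 - a2) * (w1 - a1)) =
      (w2 - a2) * ((c1 - a1) * (p2 - a2) - (c2 - a2) * (p1 - a1))
      - (c2 - a2) * ((w1 - a1) * (p2 - a2) - (w2 - a2) * (p1 - a1)) by ring.
    rewrite crw Ct; ring.
  move/(mulIf C20): e1 => e1; move/(mulIf C20): e2 => e2.
  congr (_, _); [rewrite -e1 | rewrite -e2]; ring.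
Qed.

Lemma crossing (R : realType) (a c b1 b2 : pt2 R) (r q sg : R) :
  r != 0 -> (sg = 1 \/ sg = -1) ->
  hh a c r q b1 = 0 -> hh a c r q b2 = 0 ->
  0 < sg * CC a c b1 -> 0 < sg * CC a c b2 ->
  0 <= sg * cross (psub b2 a) (psub b1 a) ->
  exists P, segment a b2 P /\ segment b1 c P /\ CC a c P != 0.
Proof.
move=> hr hsg h1 h2 s1 s2 s12.
have sg2 : sg * sg = 1 by case: hsg => ->; ring.
have sgn0 : sg != 0 by case: hsg => ->; rewrite ?oppr_eq0 oner_eq0.
set f1 := cross (psub b2 a) (psub b1 a).
set fc := cross (psub b2 a) (psub c a).
have fcE : fc = - CC a c b2 by rewrite /fc /CC /cross /psub /=; ring.
set den := f1 - fc.
have sden : 0 < sg * den by rewrite /den fcE; rewrite mulrBr mulrN opprK; exact: ltr_wpDl.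
have den0 : den != 0 by apply/eqP => d0; move: sden; rewrite d0 mulr0 ltxx.
set u := f1 / den.
have uE : u = (sg * f1) / (sg * den) by rewrite /u; field; rewrite sgn0 den0.
have u0 : 0 <= u by rewrite uE divr_ge0 // ltW.
have u1 : u < 1.
  rewrite uE ltr_pdivrMr // mul1r /den fcE. by rewrite opprK (mulrDr sg f1) ltrDl.
set P := padd b1 (pscale u (psub c b1)).
have CP : CC a c P = (1 - u) * CC a c b1 by rewrite /P /CC /cross /psub /padd /pscale /=; ring.
have CPs : 0 < sg * CC a c P by rewrite CP mulrCA mulr_gt0 // subr_gt0.
have CP0 : CC a c P != 0 by apply/eqP => e; move: CPs; rewrite e mulr0 ltxx.
have C20 : CC a c b2 != 0 by apply/eqP => e; move: s2; rewrite e mulr0 ltxx.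
set t := CC a c P / CC a c b2.
have tE : t = (sg * CC a c P) / (sg * CC a c b2) by rewrite /t; field; rewrite sgn0 C20.
have t0 : 0 < t by rewrite tE divr_gt0.
have ud : u * den = f1 by rewrite /u divfK.
have crw : cross (psub b2 a) (psub P a) = 0.
  have -> : cross (psub b2 a) (psub P a) = f1 - u * den.
    by rewrite /den /f1 /fc /P /cross /psub /padd /pscale /=; ring.
  by rewrite ud subrr.
have Ct : CC a c P = t * CC a c b2 by rewrite /t divfK.
have PE : P = padd a (pscale t (psub b2 a)).
  exact: (solve2 crw Ct C20).
have hP1 : hh a c r q P = - r * u * (1 - u) * dot (psub c b1) (psub c b1).
  have -> : hh a c r q P = (1 - u) * hh a c r q b1 + u * hh a c r q c
      - r * u * (1 - u) * dot (psub c b1) (psub c b1).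
    by rewrite /P /hh /DD /CC /dot /cross /psub /padd /pscale /=; ring.
  have -> : hh a c r q c = 0 by rewrite /hh /DD /CC /dot /cross /psub /=; ring.
  rewrite h1; ring.
have hP2 : hh a c r q P = t * hh a c r q b2 + r * dot (psub b2 a) (psub b2 a) * (t * (t - 1)).
  by rewrite PE /hh /DD /CC /dot /cross /psub /padd /pscale /=; ring.
have w2 : 0 < dot (psub b2 a) (psub b2 a).
  apply: (@sq_pos _ _ _ (CC a c b2) (dot (psub c a) (psub c a))) => //.
  rewrite -subr_ge0; set z := (X in 0 <= X).
  have -> : z = (dot (psub b2 a) (psub c a))^+2 by rewrite /z /dot /CC /cross /psub /=; ring.
  exact: sqr_ge0.
have nn : 0 <= dot (psub c b1) (psub c b1) by rewrite /dot; nra.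
have r2 : 0 < r * r by rewrite -expr2 exprn_even_gt0 //=.
have key : r * r * dot (psub b2 a) (psub b2 a) * (t * (t - 1)) =
           - (r * r) * (u * (1 - u) * dot (psub c b1) (psub c b1)).
  have e : r * dot (psub b2 a) (psub b2 a) * (t * (t - 1)) =
            - r * (u * (1 - u) * dot (psub c b1) (psub c b1)).
    have := hP2; rewrite hP1 h2 mulr0 add0r => <-; ring.
  transitivity (r * (r * dot (psub b2 a) (psub b2 a) * (t * (t - 1)))); first ring.
  rewrite e; ring.
have t1 : t <= 1.
  have A : 0 <= u * (1 - u) * dot (psub c b1) (psub c b1).
    by rewrite mulr_ge0 // mulr_ge0 // subr_ge0 ltW.
  have B : 0 < r * r * dot (psub b2 a) (psub b2 a) by rewrite mulr_gt0.
  have : r * r * dot (psub b2 a) (psub b2 a) * (t * (t - 1)) <= 0.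
    by rewrite key mulNr oppr_le0 mulr_ge0 // ltW.
  rewrite pmulr_rle0 // => tt. nra.
exists P; split; last split => //.
- by rewrite PE; exists t => //=; rewrite (ltW t0) t1.
- by exists u => //=; rewrite u0 (ltW u1).
Qed.


Definition NN (R : realType) (a c b : pt2 R) := pnorm (psub a b) * pnorm (psub c b).

Lemma pt_facts (R : realType) (a c b : pt2 R) : CC a c b != 0 ->
  0 < NN a c b /\ DD a c b ^+ 2 + CC a c b ^+ 2 = NN a c b ^+ 2.
Proof.
move=> hC.
have L : DD a c b ^+ 2 + CC a c b ^+ 2 = NN a c b ^+ 2.
  rewrite /NN /pnorm exprMn !sqr_sqrtr; last 2 first.
  - by rewrite /dot addr_ge0 // -expr2 sqr_ge0.
  - by rewrite /dot addr_ge0 // -expr2 sqr_ge0.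
  rewrite /DD /CC /dot /cross /psub /=; ring.
split=> //.
have N0 : 0 <= NN a c b by rewrite /NN mulr_ge0 // sqrtr_ge0.
rewrite lt_neqAle N0 andbT; apply/negP => /eqP e.
have : 0 < CC a c b ^+ 2 by rewrite exprn_even_gt0 //= hC.
have : 0 <= DD a c b ^+ 2 by rewrite sqr_ge0.
move: L; rewrite -e expr0n /=. lra.
Qed.

Lemma angle_circle (R : realType) (a c b1 b2 : pt2 R) (sg : R) :
  angle_at a b1 c = angle_at a b2 c -> (sg = 1 \/ sg = -1) ->
  0 < sg * CC a c b1 -> 0 < sg * CC a c b2 ->
  exists r q, r != 0 /\ hh a c r q b1 = 0 /\ hh a c r q b2 = 0.
Proof.
move=> hA hsg s1 s2.
have C10 : CC a c b1 != 0 by apply/eqP => e; move: s1; rewrite e mulr0 ltxx.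
have C20 : CC a c b2 != 0 by apply/eqP => e; move: s2; rewrite e mulr0 ltxx.
have [N1 L1] := pt_facts C10.
have [N2 L2] := pt_facts C20.
have N10 : NN a c b1 != 0 by rewrite gt_eqF.
have N20 : NN a c b2 != 0 by rewrite gt_eqF.
set x1 := DD a c b1 / NN a c b1.
set x2 := DD a c b2 / NN a c b2.
set y1 := CC a c b1 / NN a c b1.
set y2 := CC a c b2 / NN a c b2.
have E1 : x1 ^+ 2 + y1 ^+ 2 = 1.
  by rewrite /x1 /y1 !expr_div_n -mulrDl L1 divff // expf_neq0.
have E2 : x2 ^+ 2 + y2 ^+ 2 = 1.
  by rewrite /x2 /y2 !expr_div_n -mulrDl L2 divff // expf_neq0.
have xr1 : -1 <= x1 <= 1.
  have : 0 <= y1 ^+ 2 by exact: sqr_ge0. nra.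
have xr2 : -1 <= x2 <= 1.
  have : 0 <= y2 ^+ 2 by exact: sqr_ge0. nra.
have ex : x1 = x2.
  move: hA; rewrite /angle_at => hA.
  by rewrite -(@acosK R x1) ?in_itv //= -(@acosK R x2) ?in_itv //=; congr cos.
have sy1 : 0 < sg * y1 by rewrite /y1 mulrA divr_gt0.
have sy2 : 0 < sg * y2 by rewrite /y2 mulrA divr_gt0.
have ey : y1 = y2.
  have sq : y1 ^+ 2 = y2 ^+ 2 by rewrite -[LHS](addKr (x1 ^+ 2)) E1 ex -E2 addKr.
  move/eqP: sq; rewrite eqf_sqr => /orP [/eqP //| /eqP e].
  by move: sy1; rewrite e mulrN oppr_gt0 ltNge (ltW sy2).
have y10 : y1 != 0 by apply/eqP => e; move: sy1; rewrite e mulr0 ltxx.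
exists y1, x1; split => //; split.
- rewrite /hh /x1 /y1; field; exact: N10.
- rewrite /hh ex ey /x2 /y2; field; exact: N20.
Qed.


Lemma CCa (R : realType) (a c : pt2 R) : CC a c a = 0.
Proof. rewrite /CC /cross /psub /=; ring. Qed.
Lemma CCc (R : realType) (a c : pt2 R) : CC a c c = 0.
Proof. rewrite /CC /cross /psub /=; ring. Qed.

Lemma common_pt (R : realType) (k : edge_kind) (alpha : R) (a c : pt2 R)
  (V E : finType) (pos : V -> pt2 R) (src tgt : E -> V) (curve : E -> set (pt2 R))
  (e1 e2 : E) (p : pt2 R) :
  plane_alpha_multigraph k alpha pos src tgt curve ->
  edge_between pos src tgt a c e1 -> e1 != e2 ->
  curve e1 p -> curve e2 p -> CC a c p != 0 -> False.
Proof.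
case=> _ _ _ hpl _ hb1 ne c1 c2 hC.
have [v [pv [hv _]]] := hpl _ _ ne _ c1 c2.
have : p = a \/ p = c.
  by rewrite pv; case: hb1 => -[h1 h2]; case: hv => ->; tauto.
by case=> e; rewrite e ?CCa ?CCc eqxx in hC.
Qed.

Lemma segment_sym (R : realType) (p q : pt2 R) : segment p q `<=` segment q p.
Proof.
move=> x [t /= /andP [t0 t1] <-]; exists (1 - t).
  by rewrite /= subr_ge0 t1 lerBlDr lerDl t0.
rewrite /padd /pscale /psub /=; congr (_, _); ring.
Qed.

Lemma bend_norm (R : realType) (alpha : R) (a c : pt2 R) (V E : finType)
  (pos : V -> pt2 R) (src tgt : E -> V) (curve : E -> set (pt2 R)) (e : E) :
  is_alpha_bend_edge alpha (pos (src e)) (pos (tgt e)) (curve e) ->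
  edge_between pos src tgt a c e ->
  exists b, CC a c b != 0 /\ angle_at a b c = alpha /\
    segment a b `<=` curve e /\ segment b c `<=` curve e.
Proof.
move=> hb hbet; case: hbet hb => [[-> ->]|[-> ->]] [b [hl [ha hc]]].
  exists b; split; first by apply/eqP.
  by split => //; rewrite hc; split => x hx; [left | right].
exists b; split.
  apply/eqP => e0; apply: hl; rewrite /on_line.
  move: e0; rewrite /CC /cross /psub /= => e0.
  transitivity (- ((c.1 - a.1) * (b.2 - a.2) - (c.2 - a.2) * (b.1 - a.1))); first ring.
  by rewrite e0 oppr0.
split.
  rewrite -ha /angle_at; congr acos; congr (_ / _); [rewrite /dot; ring | exact: mulrC].
by rewrite hc; split => x hx; [right | left]; apply: segment_sym.
Qed.

Lemma bend_pair (R : realType) (alpha : R) (a c : pt2 R)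
  (V E : finType) (pos : V -> pt2 R) (src tgt : E -> V) (curve : E -> set (pt2 R))
  (e1 e2 : E) (b1 b2 : pt2 R) (sg : R) :
  plane_alpha_multigraph Bend alpha pos src tgt curve ->
  edge_between pos src tgt a c e1 -> edge_between pos src tgt a c e2 -> e1 != e2 ->
  angle_at a b1 c = alpha -> segment a b1 `<=` curve e1 -> segment b1 c `<=` curve e1 ->
  angle_at a b2 c = alpha -> segment a b2 `<=` curve e2 -> segment b2 c `<=` curve e2 ->
  (sg = 1 \/ sg = -1) -> 0 < sg * CC a c b1 -> 0 < sg * CC a c b2 -> False.
Proof.
move=> hG hb1 hb2 ne an1 sa1 sc1 an2 sa2 sc2 hsg s1 s2.
have [r [q [r0 [h1 h2]]]] := angle_circle (etrans an1 (esym an2)) hsg s1 s2.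
have [X|X] := leP 0 (sg * cross (psub b2 a) (psub b1 a)).
  have [P [P1 [P2 P3]]] := crossing r0 hsg h1 h2 s1 s2 X.
  exact: (common_pt hG hb1 ne (sc1 _ P2) (sa2 _ P1) P3).
have h21 : 0 <= sg * cross (psub b1 a) (psub b2 a).
  have -> : cross (psub b1 a) (psub b2 a) = - cross (psub b2 a) (psub b1 a)
    by rewrite /cross; ring.
  rewrite mulrN oppr_ge0; exact: ltW.
have [P [P1 [P2 P3]]] := crossing r0 hsg h2 h1 s2 s1 h21.
exact: (common_pt hG hb1 ne (sa1 _ P1) (sc2 _ P2) P3).
Qed.


Definition Mpt (R : realType) (a c : pt2 R) (kap eps : R) : pt2 R :=
  ((a.1 + c.1) / 2 + eps * kap * (c.2 - a.2), (a.2 + c.2) / 2 - eps * kap * (c.1 - a.1)).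

Definition kap (R : realType) (alpha : R) : R :=
  (1 - cos (pi - alpha)) / (2 * sin (pi - alpha)).

Lemma Mpt_swap (R : realType) (a c : pt2 R) (k e : R) : Mpt c a k e = Mpt a c k (- e).
Proof. rewrite /Mpt /=; congr (_, _); ring. Qed.

Lemma CC_Mpt (R : realType) (a c : pt2 R) (k e : R) :
  CC a c (Mpt a c k e) = - (e * k) * dot (psub c a) (psub c a).
Proof. rewrite /CC /Mpt /cross /dot /psub /=; by field. Qed.

Lemma sinb_gt0 (R : realType) (alpha : R) : 0 < alpha < pi -> 0 < sin (pi - alpha).
Proof. move=> /andP [h1 h2]; apply: sin_gt0_pi; apply/andP; split; lra. Qed.

Lemma kap_neq0 (R : realType) (alpha : R) : 0 < alpha < pi -> kap alpha != 0.
Proof.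
move=> ha; have s := sinb_gt0 ha.
have cs := cos2Dsin2 (pi - alpha).
have c1 : cos (pi - alpha) < 1.
  have : 0 < sin (pi - alpha) ^+ 2 by rewrite exprn_gt0.
  nra.
rewrite /kap mulf_neq0 // ?invr_eq0 ?mulf_neq0 ?gt_eqF //; last by rewrite subr_gt0.
Qed.

Lemma arc_mid (R : realType) (alpha : R) (o : pt2 R) (r t0 : R) :
  0 < alpha < pi ->
  let th := 2 * (pi - alpha) in
  padd o (pscale r (cos (t0 + (pi - alpha)), sin (t0 + (pi - alpha)))) =
  Mpt (padd o (pscale r (cos t0, sin t0)))
      (padd o (pscale r (cos (t0 + th), sin (t0 + th)))) (kap alpha) 1.
Proof.
move=> ha th; have s := sinb_gt0 ha.
set b := pi - alpha; set phi := t0 + b.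
have e0 : t0 = phi - b by rewrite /phi; ring.
have e1 : t0 + th = phi + b by rewrite /phi /th /b; ring.
rewrite e1 e0.
rewrite cosB sinB cosD sinD /Mpt /kap -/b /padd /pscale /=.
have sb : sin b != 0 by rewrite gt_eqF.
congr (_, _); field; rewrite sb; by [].
Qed.


Lemma arc_norm (R : realType) (alpha : R) (a c : pt2 R) (V E : finType)
  (pos : V -> pt2 R) (src tgt : E -> V) (curve : E -> set (pt2 R)) (e : E) :
  0 < alpha < pi ->
  is_alpha_arc_edge alpha (pos (src e)) (pos (tgt e)) (curve e) ->
  edge_between pos src tgt a c e ->
  exists eps, (eps = 1 \/ eps = -1) /\ curve e (Mpt a c (kap alpha) eps).
Proof.
move=> ha [o [r [t0 [r0 [hC hend]]]]] hbet.
have hm := arc_mid o r t0 ha.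
have mC : curve e (padd o (pscale r (cos (t0 + (pi - alpha)), sin (t0 + (pi - alpha))))).
  rewrite hC; exists (t0 + (pi - alpha)) => //=.
  move: ha => /andP [h1 h2]; apply/andP; split; lra.
rewrite hm in mC.
case: hbet => -[e1 e2]; rewrite e1 e2 in hend; case: hend => -[E1 E2]; rewrite -E1 -E2 in mC.
- by exists 1; split; [left|].
- by exists (-1); split; [right|]; rewrite Mpt_swap in mC.
- by exists (-1); split; [right|]; rewrite Mpt_swap in mC.
- by exists 1; split; [left|].
Qed.


Definition Wit (R : realType) (k : edge_kind) (alpha : R) (a c : pt2 R) (E : Type)
  (curve : E -> set (pt2 R)) (e : E) (s : bool) : Prop :=
  match k with
  | Bend => exists b, CC a c b != 0 /\ (0 < CC a c b) = s /\ angle_at a b c = alpha /\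
             segment a b `<=` curve e /\ segment b c `<=` curve e
  | Arc => exists eps, (eps = 1 \/ eps = -1) /\ curve e (Mpt a c (kap alpha) eps) /\
             (0 < CC a c (Mpt a c (kap alpha) eps)) = s
  end.

Lemma dd_neq0 (R : realType) (a c : pt2 R) : a <> c -> dot (psub c a) (psub c a) != 0.
Proof.
move=> ac; apply/negP => /eqP h; apply: ac.
have h1 : (c.1 - a.1) ^+ 2 + (c.2 - a.2) ^+ 2 = 0 by rewrite -h /dot /psub /=; ring.
move/eqP: h1; rewrite paddr_eq0 ?sqr_ge0 // !sqrf_eq0 !subr_eq0 => /andP [/eqP e1 /eqP e2].
by move: e1 e2 {h}; case: a c => a1 a2 [c1 c2] /= -> ->.
Qed.

Lemma G1 (R : realType) (k : edge_kind) (alpha : R) (a c : pt2 R) (V E : finType)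
  (pos : V -> pt2 R) (src tgt : E -> V) (curve : E -> set (pt2 R)) (e : E) :
  0 < alpha < pi -> plane_alpha_multigraph k alpha pos src tgt curve ->
  edge_between pos src tgt a c e -> exists s, Wit k alpha a c curve e s.
Proof.
move=> ha [_ _ hk _ _] hb; move: (hk e); case: k hk => _ /= he.
- have [b [b0 [hab [s1 s2]]]] := bend_norm he hb.
  by exists (0 < CC a c b), b.
- have [eps [h1 h2]] := arc_norm ha he hb.
  by exists (0 < CC a c (Mpt a c (kap alpha) eps)), eps.
Qed.

Lemma G3 (R : realType) (k : edge_kind) (alpha : R) (a c : pt2 R) (E : Type)
  (curve : E -> set (pt2 R)) (e : E) (s : bool) :
  0 < alpha < pi -> a <> c -> Wit k alpha a c curve e s ->
  exists p, curve e p /\ CC a c p != 0 /\ (0 < CC a c p) = s.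
Proof.
move=> ha ac; case: k => /=.
- move=> [b [b0 [bs [_ [sa _]]]]]; exists b; split => //.
  apply: sa; exists 1; first by rewrite /= lexx ler01.
  rewrite /padd /pscale /psub /=; case: b {b0 bs} => b1 b2 /=; congr (_, _); ring.
- move=> [eps [he [hc hs]]]; exists (Mpt a c (kap alpha) eps); split => //; split => //.
  rewrite CC_Mpt mulf_neq0 ?dd_neq0 // oppr_eq0 mulf_neq0 ?kap_neq0 //.
  by case: he => ->; rewrite ?oppr_eq0 oner_eq0.
Qed.

Lemma opp_sign (R : realType) (X : R) : X != 0 -> (0 < - X) = (0 < X) -> False.
Proof.
move=> hX; rewrite oppr_gt0; case: ltgtP => // h.
by move: hX; rewrite h eqxx.
Qed.

Lemma G2 (R : realType) (k : edge_kind) (alpha : R) (a c : pt2 R) (V E : finType)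
  (pos : V -> pt2 R) (src tgt : E -> V) (curve : E -> set (pt2 R)) (e1 e2 : E) (s : bool) :
  0 < alpha < pi -> a <> c -> plane_alpha_multigraph k alpha pos src tgt curve ->
  edge_between pos src tgt a c e1 -> edge_between pos src tgt a c e2 -> e1 != e2 ->
  Wit k alpha a c curve e1 s -> Wit k alpha a c curve e2 s -> False.
Proof.
move=> ha ac hG hb1 hb2 ne; case: k hG => hG /=.
- move=> [b1 [n1 [s1 [an1 [sa1 sc1]]]]] [b2 [n2 [s2 [an2 [sa2 sc2]]]]].
  have sgn : forall b, CC a c b != 0 -> (0 < CC a c b) = s ->
      0 < (if s then 1 else -1) * CC a c b.
    move=> b nb sb; case: s sb {s1 s2} => sb; first by rewrite mul1r.
    rewrite mulN1r oppr_gt0; have [h|h|h] := ltgtP (CC a c b) 0 => //.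
    - by rewrite h in sb.
    - by rewrite h eqxx in nb.
  have hsg : ((if s then 1 else -1) : R) = 1 \/ ((if s then 1 else -1) : R) = -1.
    by case: s {s1 s2 sgn}; [left|right].
  exact: (bend_pair hG hb1 hb2 ne an1 sa1 sc1 an2 sa2 sc2 hsg (sgn _ n1 s1) (sgn _ n2 s2)).
- move=> [eps1 [he1 [hc1 hs1]]] [eps2 [he2 [hc2 hs2]]].
  have X0 : kap alpha * dot (psub c a) (psub c a) != 0 by rewrite mulf_neq0 ?kap_neq0 ?dd_neq0.
  have nz : forall eps, (eps = 1 \/ eps = -1) -> CC a c (Mpt a c (kap alpha) eps) != 0.
    move=> eps he; rewrite CC_Mpt -mulNr -mulrA mulf_neq0 // oppr_eq0.
    by case: he => ->; rewrite ?oppr_eq0 oner_eq0.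
  case: he1 hc1 hs1 => -> hc1 hs1; case: he2 hc2 hs2 => -> hc2 hs2.
  + exact: (common_pt hG hb1 ne hc1 hc2 (nz 1 (or_introl erefl))).
  + apply: (@opp_sign _ (kap alpha * dot (psub c a) (psub c a))) => //.
    move: hs1 hs2; rewrite !CC_Mpt !mul1r !mulN1r !opprK !mulNr => h1 h2; rewrite h1 h2.
    by [].
  + apply: (@opp_sign _ (kap alpha * dot (psub c a) (psub c a))) => //.
    move: hs1 hs2; rewrite !CC_Mpt !mul1r !mulN1r !opprK !mulNr => h1 h2; rewrite h1 h2.
    by [].
  + exact: (common_pt hG hb1 ne hc1 hc2 (nz (-1) (or_intror erefl))).
Qed.

Unset Implicit Arguments.

Theorem proposition1 (R : realType) (alpha : R) (k : edge_kind)
  (a c : pt2 R) (V E : finType) (pos : V -> pt2 R) (src tgt : E -> V)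
  (curve : E -> set (pt2 R)) :
  0 < alpha < pi -> a <> c ->
  plane_alpha_multigraph k alpha pos src tgt curve ->
  (#|[set e : E | `[< edge_between pos src tgt a c e >]]| <= 2)%N /\
  (forall s : bool,
     (#|[set e : E | `[< edge_between pos src tgt a c e /\
                        curve_in a c (curve e) (open_halfplane a c s) >]]| <= 1)%N).
Proof.
move=> ha ac hG.
pose A (s : bool) := [set e : E | `[< edge_between pos src tgt a c e /\ Wit k alpha a c curve e s >]]%SET.
have A1 : forall s, (#|A s| <= 1)%N.
  move=> s; apply/card_le1_eqP => x y.
  rewrite /A !inE => -[bx wx] [by_ wy].
  apply/eqP; apply/negP => /negP ne; rewrite eq_sym in ne.
  exact: (G2 ha ac hG bx by_ ne wx wy).
have cardE : forall P : E -> Prop, #|[set e : E | `[< P e >]]| = #|[set e : E | `[< P e >]]%SET|.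
  move=> P; apply: eq_card => e; rewrite inE; apply/idP/idP; [by move=> /asboolP | by move=> h; apply/asboolP].
split.
  rewrite cardE.
  apply: (@leq_trans #|A true :|: A false|).
    apply: subset_leq_card; apply/fintype.subsetP => e; rewrite inE => /asboolP be; rewrite /A !inE.
    have [s ws] := G1 ha hG be.
    by case: s ws => ws; apply/orP; [left|right]; apply/asboolP.
  apply: (leq_trans (leq_card_setU _ _)).
  by rewrite -[2%N]/(1 + 1)%N leq_add.
move=> s; rewrite cardE; apply: (leq_trans _ (A1 s)).
apply: subset_leq_card; apply/fintype.subsetP => e; rewrite inE => /asboolP [be hin]; rewrite /A !inE.
split => //.
have [s' ws] := G1 ha hG be.
have [p [cp [np sp]]] := G3 ha ac ws.
suff -> : s = s' by [].
have hp : open_halfplane a c s p.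
  apply: hin; split => //; case => e0; move: np; rewrite e0 ?CCa ?CCc eqxx //.
move: hp; rewrite /open_halfplane /= -/(CC a c p) -sp.
clear hin; case: s => h; first by rewrite h.
by rewrite ltNge (ltW h).
Qed.
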